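(* Let $p_{\mathcal I}$ denote the depth of the cluster tree $\mathcal T_{\mathcal I}$. Then $$W_{\rm mm}(t_0,s_0,r_0)\le C_{\rm mm}k^2(p_{\mathcal I}+1)(\#\hat t_0+\#\hat s_0+\#\hat r_0)\quad\text{for all }(t_0,s_0,r_0)\in\mathcal T_{\mathcal I\times\mathcal I\times\mathcal I},$$ with $C_{\rm mm}:=C_{\rm sp}^2C_{\rm mb}$.
   Context: $\mathcal T_{\mathcal I}$ is a binary cluster tree for a finite index set $\mathcal I$ (every cluster $t$ has a label $\hat t\subseteq\mathcal I$, the root has label $\mathcal I$, every non-leaf cluster has exactly two sons whose labels disjointly partition $\hat t$). $\mathcal T_{\mathcal I\times\mathcal I}$ is a block tree: its nodes are pairs $(t,s)$ of clusters, its root is the pair of roots, and a non-leaf block $(t,s)$ has sons $\mathrm{sons}^+(t)\times\mathrm{sons}^+(s)$, where $\mathrm{sons}^+(t)=\mathrm{sons}(t)$ if $t$ is not a leaf and $\mathrm{sons}^+(t)=\{t\}$ otherwise. $C_{\rm sp}$ is the sparsity constant: for each cluster $t$, at most $C_{\rm sp}$ clusters $s$ satisfy $(t,s)\in\mathcal T_{\mathcal I\times\mathcal I}$, and at most $C_{\rm sp}$ clusters $s$ satisfy $(s,t)\in\mathcal T_{\mathcal I\times\mathcal I}$. Matrices are $\mathcal H^2$-matrices of local rank $k$ on this block tree. $W_{\rm mm}(t,s,r)$, for $(t,s),(s,r)\in\mathcal T_{\mathcal I\times\mathcal I}$, is the number of operations of the recursive algorithm performing $Z|_{\hat t\times\hat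 r}\gets Z|_{\hat t\times\hat r}+X|_{\hat t\times\hat s}Y|_{\hat s\times\hat r}$: if neither $(t,s)$ nor $(s,r)$ is a leaf, it recurses over all $(t',s',r')\in\mathrm{sons}^+(t)\times\mathrm{sons}^+(s)\times\mathrm{sons}^+(r)$ (if $(t,r)$ is a leaf, the results go into temporary submatrices that are then added to $Z|_{\hat t\times\hat r}$ by local low-rank updates); otherwise the product is a low-rank matrix computed in factorized form and added by a local low-rank update. The triple tree $\mathcal T_{\mathcal I\times\mathcal I\times\mathcal I}$ has root (root,root,root); a triple $(t,s,r)$ with $(t,s)$ and $(s,r)$ both non-leaves has sons $\mathrm{sons}^+(t)\times\mathrm{sons}^+(s)\times\mathrm{sons}^+(r)$, and otherwise no sons. $C_{\rm mb}$ is a constant such that $W_{\rm mm}(t,s,r)\le C_{\rm mb}k^2(\#\hat t+\#\hat s+\#\hat r)$ if $(t,s)$ or $(s,r)$ is a leaf, and $W_{\rm mm}(t,s,r)\le C_{\rm mb}k^2(\#\hat t+\#\hat s+\#\hat r)+\sum_{t'\in\mathrm{sons}^+(t),s'\in\mathrm{sons}^+(s),r'\in\mathrm{sons}^+(r)}W_{\rm mm}(t',s',r')$ otherwise. *)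

(* Defs.v *)
From mathcomp Require Import all_boot all_order all_algebra.
Set Implicit Arguments. Unset Strict Implicit. Unset Printing Implicit Defensive.
Import Order.TTheory GRing.Theory Num.Theory.

(* A labelled binary tree; the label of a node is its index subset \hat t. *)
Inductive ctree (I : finType) : Type :=
| CLeaf of {set I}
| CNode of {set I} & ctree I & ctree I.

Section ClusterTree.
Variable I : finType.

Definition clabel (u : ctree I) : {set I} :=
  match u with CLeaf s => s | CNode s _ _ => s end.

Fixpoint ctree_wf (u : ctree I) : bool :=
  match u with
  | CLeaf _ => true
  | CNode s l r =>
      [&& clabel l :|: clabel r == s, [disjoint clabel l & clabel r],
          ctree_wf l & ctree_wf r]
  end.

Definition is_cluster_tree (T : ctree I) : bool :=
  ctree_wf T && (clabel T == setT).

(* depth p_I of the tree (root has level 0) *)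
Fixpoint depth (u : ctree I) : nat :=
  match u with
  | CLeaf _ => 0
  | CNode _ l r => (maxn (depth l) (depth r)).+1
  end.

(* Clusters are identified with their positions in the tree, i.e. paths from
   the root (false = first son, true = second son). *)
Fixpoint node (u : ctree I) (p : seq bool) : option (ctree I) :=
  match p, u with
  | [::], _ => Some u
  | b :: p', CNode _ l r => node (if b then r else l) p'
  | _ :: _, CLeaf _ => None
  end.

Definition is_cluster (T : ctree I) (t : seq bool) : bool := node T t.

Definition hat (T : ctree I) (t : seq bool) : {set I} :=
  match node T t with Some u => clabel u | None => set0 end.

Definition is_leaf (T : ctree I) (t : seq bool) : bool :=
  match node T t with Some (CLeaf _) => true | _ => false end.

Definition sonsp (T : ctree I) (t : seq bool) : seq (seq bool) :=
  match node T t with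
  | Some (CNode _ _ _) => [:: rcons t false; rcons t true]
  | _ => [:: t]
  end.

(* Block tree determined by the predicate [bleaf] telling which blocks are
   leaves: root (root,root), sons of a non-leaf block are sons^+ x sons^+. *)
Inductive in_btree (T : ctree I) (bleaf : seq bool -> seq bool -> bool)
  : seq bool -> seq bool -> Prop :=
| bt_root : in_btree T bleaf [::] [::]
| bt_son t s t' s' : in_btree T bleaf t s -> ~~ bleaf t s ->
    t' \in sonsp T t -> s' \in sonsp T s -> in_btree T bleaf t' s'.

(* well-formedness of a block tree: a block of two leaf clusters has no sons
   (otherwise it would be its own son) *)
Definition is_block_tree (T : ctree I) (bleaf : seq bool -> seq bool -> bool)
  : Prop :=
  forall t s, in_btree T bleaf t s -> is_leaf T t -> is_leaf T s -> bleaf t s.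

Definition sparse (T : ctree I) (bleaf : seq bool -> seq bool -> bool)
  (Csp : nat) : Prop :=
  (forall t (ss : seq (seq bool)), uniq ss ->
     (forall s, s \in ss -> in_btree T bleaf t s) -> size ss <= Csp)%N /\
  (forall t (ss : seq (seq bool)), uniq ss ->
     (forall s, s \in ss -> in_btree T bleaf s t) -> size ss <= Csp)%N.

Inductive in_ttree (T : ctree I) (bleaf : seq bool -> seq bool -> bool)
  : seq bool -> seq bool -> seq bool -> Prop :=
| tt_root : in_ttree T bleaf [::] [::] [::]
| tt_son t s r t' s' r' : in_ttree T bleaf t s r ->
    ~~ bleaf t s -> ~~ bleaf s r ->
    t' \in sonsp T t -> s' \in sonsp T s -> r' \in sonsp T r ->
    in_ttree T bleaf t' s' r'.

End ClusterTree.

(* Main.v *)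
Require Import Defs.
From mathcomp Require Import all_boot all_order all_algebra.
Import Order.TTheory GRing.Theory Num.Theory.
From mathcomp Require Import ring.
Module Aux.
Set Implicit Arguments. Unset Strict Implicit.

Section Tree.
Variable I : finType.
Implicit Types (u v : ctree I) (p q : seq bool).

Lemma node_nil u : node u [::] = Some u.
Proof. by case: u. Qed.

Lemma node_cat u p q : node u (p ++ q) = obind (fun v => node v q) (node u p).
Proof. by elim: p u => [|b p IH] [s|s l r] //=. Qed.

Lemma node_sub u q v : ctree_wf u -> node u q = Some v ->
  clabel v \subset clabel u /\ ctree_wf v.
Proof.
elim: q u => [|b q IH] [s|s l r] //=; try by move=> H [<-]; split; rewrite /= ?subxx.
case/and4P=> /eqP Hs _ wl wr.
have wb : ctree_wf (if b then r else l) by case: b.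
move=> /(IH _ wb) [H1 H2]; split => //.
rewrite -Hs; apply: (subset_trans H1); by clear wb H1 H2; case: b; [apply: subsetUr|apply: subsetUl].
Qed.

Lemma node_depth u p v : node u p = Some v -> (size p + depth v <= depth u)%N.
Proof.
elim: p u => [|b p IH] [s|s l r] //=; try by move=> [<-].
move=> /IH H; rewrite addSn ltnS; apply: (leq_trans H); clear H.
by case: b; [apply: leq_maxr|apply: leq_maxl].
Qed.

Variable T : ctree I.
Hypothesis wfT : ctree_wf T.

Lemma hat_cat p q : hat T (p ++ q) \subset hat T p.
Proof.
rewrite /hat node_cat; case E: (node T p) => [v|] //=.
case E2: (node v q) => [w|] //; last exact: sub0set.
have [_ wv] := node_sub wfT E.
by have [] := node_sub wv E2.
Qed.

Lemma hat_split p c q q' :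
  [disjoint hat T (p ++ c :: q) & hat T (p ++ ~~ c :: q')].
Proof.
have e1 : p ++ c :: q = (p ++ [:: c]) ++ q by rewrite -catA.
have e2 : p ++ ~~ c :: q' = (p ++ [:: ~~ c]) ++ q' by rewrite -catA.
rewrite e1 e2; apply: disjointW; try apply: hat_cat.
rewrite /hat !node_cat; case E: (node T p) => [v|] //=; last by rewrite -setI_eq0 set0I.
have [_ wv] := node_sub wfT E.
case: v E wv => [s|s l r] //= _; first by rewrite -setI_eq0 set0I.
case/and4P=> _ D _ _; clear e1 e2; case: c => /=; rewrite !node_nil /=; [rewrite disjoint_sym; exact: D | exact: D].
Qed.

Definition lvl M (c : seq bool) :=
  is_cluster T c && ((size c == M) || ((size c < M)%N && is_leaf T c)).

Lemma node_rcons c b : node T (rcons c b) =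
  obind (fun v => match v with CLeaf _ => None | CNode _ l r => Some (if b then r else l) end) (node T c).
Proof. rewrite -cats1 node_cat; case: (node T c) => [[s|s l r]|] //=; by rewrite node_nil. Qed.

Lemma sons_pre c c' : c' \in sonsp T c -> exists q, c' = c ++ q.
Proof.
rewrite /sonsp; case: (node T c) => [[s|s l r]|];
  rewrite ?inE => /=; try by move/eqP->; exists [::]; rewrite cats0.
by case/orP=> /eqP->; [exists [:: false]|exists [:: true]]; rewrite cats1.
Qed.

Lemma sonsp_uniq c : uniq (sonsp T c).
Proof.
rewrite /sonsp; case: (node T c) => [[s|s l r]|] //=.
by rewrite inE eqseq_rcons andbF.
Qed.

Lemma sons_lvl M c c' : lvl M c -> c' \in sonsp T c -> lvl M.+1 c'.
Proof.
rewrite /lvl /sonsp /is_cluster /is_leaf; case E: (node T c) => [[s|s l r]|] //=.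
- move=> /orP H; rewrite inE => /eqP ->; rewrite E /= andbT.
  case: H => [/eqP->|/andP[H _]]; first by rewrite ltnSn orbT.
  by rewrite ltnS ltnW // orbT.
- move=> /orP[/eqP Hs|/andP[_ //]].
  rewrite !inE => /orP[] /eqP ->; rewrite node_rcons E /= size_rcons Hs eqxx //.
Qed.

Lemma sons_take M c c' : lvl M c -> c' \in sonsp T c -> take M c' = c.
Proof.
rewrite /lvl /sonsp /is_cluster /is_leaf; case E: (node T c) => [[s|s l r]|] //=.
- move=> /orP H; rewrite inE => /eqP ->; apply: take_oversize.
  by case: H => [/eqP->|/andP[H _]] //; rewrite ltnW.
- move=> /orP[/eqP Hs|/andP[_ //]].
  by rewrite !inE => /orP[] /eqP ->; rewrite -cats1 take_size_cat.
Qed.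

Lemma lvl_leaf M c : (depth T <= M)%N -> lvl M c -> is_leaf T c.
Proof.
rewrite /lvl /is_cluster /is_leaf; case E: (node T c) => [[s|s l r]|] //=.
move=> HM /orP[/eqP Hs|/andP[_ //]].
have := node_depth E; rewrite Hs /= => H.
have : (M + 1 <= M)%N by apply: (leq_trans _ HM); apply: (leq_trans _ H); rewrite leq_add2l.
by rewrite addn1 ltnn.
Qed.

Lemma list_cmp (a b : seq bool) : (exists q, b = a ++ q) \/ (exists q, a = b ++ q) \/
  exists p c q q', a = p ++ c :: q /\ b = p ++ ~~ c :: q'.
Proof.
elim: a b => [|x a IH] [|y b]; try by left; exists [::]; rewrite ?cats0.
- by left; exists (y :: b).
- by right; left; exists (x :: a).
case: (IH b) => [[q ->]|[[q ->]|[p [c [q [q' [-> ->]]]]]]].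
- case: (eqVneq x y) => [->|H]; first by left; exists q.
  right; right; exists [::], x, a, (a ++ q); split => //=.
  by move: H; case: x; case: y.
- case: (eqVneq x y) => [->|H]; first by right; left; exists q.
  right; right; exists [::], x, (b ++ q), b; split => //=.
  by move: H; case: x; case: y.
- case: (eqVneq x y) => [->|H].
  + by right; right; exists (y :: p), c, q, q'.
  right; right; exists [::], x, (p ++ c :: q), (p ++ ~~ c :: q'); split => //=.
  by move: H; case: x; case: y.
Qed.

Lemma leaf_ext a q : is_leaf T a -> is_cluster T (a ++ q) -> q = [::].
Proof.
rewrite /is_leaf /is_cluster node_cat; case: (node T a) => [[s|s l r]|] //= _.
by case: q.
Qed.

Lemma lvl_disj M a b : lvl M a -> lvl M b -> a != b -> [disjoint hat T a & hat T b].
Proof.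
move=> La Lb Hab.
have pre : forall x y q, lvl M x -> lvl M y -> y = x ++ q -> q = [::].
  move=> x y q /andP[_ Hx] /andP[cy Hy] E.
  case/orP: Hx => [/eqP Sx|/andP[_ lx]]; last by apply: (leaf_ext lx); rewrite -E.
  case/orP: Hy => [/eqP Sy|/andP[Sy _]].
    by apply/eqP; rewrite -size_eq0; move: Sy; rewrite E size_cat Sx -{2}[M]addn0 => /eqP; rewrite eqn_add2l.
  by move: Sy; rewrite E size_cat Sx ltnNge leq_addr.
case: (list_cmp a b) => [[q E]|[[q E]|[p [c [q [q' [-> ->]]]]]]].
- by move: Hab; rewrite E (pre _ _ _ La Lb E) cats0 eqxx.
- by move: Hab; rewrite E (pre _ _ _ Lb La E) cats0 eqxx.
- exact: hat_split.
Qed.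


Lemma sum_disj M (B : seq (seq bool)) (S : {set I}) : uniq B ->
  (forall b, b \in B -> lvl M b /\ hat T b \subset S) ->
  (\sum_(b <- B) #|hat T b| <= #|S|)%N.
Proof.
elim: B S => [|b B IH] S; first by rewrite big_nil.
move=> /= /andP[bB UB] H; rewrite big_cons.
have [Lb Sb] := H b (mem_head _ _).
apply: (@leq_trans (#|hat T b| + #|S :\: hat T b|)).
  rewrite leq_add2l; apply: IH => // b' b'B.
  have b'B' : b' \in b :: B by rewrite inE b'B orbT.
  have [Lb' Sb'] := H b' b'B'.
  split => //; rewrite subsetD Sb' /= disjoint_sym; apply: (lvl_disj Lb Lb').
  by apply/eqP => E; move: bB; rewrite E b'B.
rewrite cardsD (setIidPr Sb) subnKC //; exact: subset_leq_card.
Qed.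

End Tree.

Lemma sum_pick1 (B : eqType) (Bs : seq B) (F : B -> nat) a :
  uniq Bs -> a \in Bs -> \sum_(b <- Bs) F b * (a == b) = F a.
Proof.
move=> U aB; rewrite (big_rem a) //= eqxx muln1 big1_seq ?addn0 //.
move=> b /andP[_ Hb]; case: (eqVneq a b) => [E|]; last by rewrite muln0.
by move: Hb; rewrite -E mem_rem_uniqF.
Qed.

Lemma regroup (A B : eqType) (L : seq A) (f : A -> B) (F : B -> nat) (Bs : seq B) :
  uniq Bs -> {subset map f L <= Bs} ->
  \sum_(y <- L) F (f y) = \sum_(b <- Bs) F b * count (fun y => f y == b) L.
Proof.
move=> U; elim: L => [|y L IH] H.
  by rewrite big_nil big1 // => b _; rewrite muln0.
rewrite big_cons IH; last by move=> z Hz; apply: H; rewrite /= inE Hz orbT.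
transitivity (\sum_(b <- Bs) (F b * (f y == b) + F b * count (fun y => f y == b) L)).
  by rewrite big_split /= sum_pick1 //; apply: H; rewrite /= inE eqxx.
by apply: eq_bigr => b _; rewrite /= mulnDr.
Qed.

Lemma uniq_flatten_map (A B : eqType) (L : seq A) (F : A -> seq B) :
  uniq L -> (forall x, x \in L -> uniq (F x)) ->
  (forall x x' y, x \in L -> x' \in L -> y \in F x -> y \in F x' -> x = x') ->
  uniq (flatten (map F L)).
Proof.
elim: L => [|x L IH] //= /andP[xL UL] UF Inj.
rewrite cat_uniq UF ?inE ?eqxx //= IH //; last first.
- by move=> a a' y Ha Ha'; apply: Inj; rewrite inE ?Ha ?Ha' orbT.
- by move=> a Ha; apply: UF; rewrite inE Ha orbT.
rewrite andbT; apply/hasP => -[y /flattenP [ys /mapP [x' x'L ->] yx'] yx].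
have x'L' : x' \in x :: L by rewrite inE x'L orbT.
have E := Inj x x' y (mem_head _ _) x'L' yx yx'.
by move: xL; rewrite E x'L.
Qed.

Lemma count2 (A B C : eqType) (L : seq A) (g : A -> B) (h : A -> C)
  (Q1 : B -> Prop) (Q2 : B -> C -> Prop) n :
  uniq L -> {in L &, forall x y, g x = g y -> h x = h y -> x = y} ->
  (forall bs, uniq bs -> (forall b, b \in bs -> Q1 b) -> size bs <= n) ->
  (forall b cs, uniq cs -> (forall c, c \in cs -> Q2 b c) -> size cs <= n) ->
  (forall x, x \in L -> Q1 (g x) /\ Q2 (g x) (h x)) -> size L <= n * n.
Proof.
move=> UL Inj H1 H2 HQ.
set Bs := undup (map g L).
pose Cs b := undup [seq h x | x <- L & g x == b].
have -> : size L = size (map (fun x => (g x, h x)) L) by rewrite size_map.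
apply: (leq_trans (uniq_leq_size (s2 := [seq (b, c) | b <- Bs, c <- Cs b]) _ _)).
- rewrite map_inj_in_uniq // => x y Hx Hy [] E1 E2; exact: Inj.
- move=> z /mapP [x xL ->]; apply/allpairsPdep; exists (g x), (h x); split => //.
    by rewrite mem_undup map_f.
  by rewrite mem_undup; apply: map_f; rewrite mem_filter eqxx.
rewrite size_allpairs_dep sumnE big_map.
apply: (@leq_trans (\sum_(b <- Bs) n)).
  apply: leq_sum => b _; apply: (H2 b); first exact: undup_uniq.
  move=> c; rewrite mem_undup => /mapP [x]; rewrite mem_filter => /andP [/eqP gb xL] ->.
  by rewrite -gb; case: (HQ x xL).
rewrite big_const_seq iter_addn_0 count_predT mulnC leq_mul2r.
apply/orP; right; apply: H1; first exact: undup_uniq.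
by move=> b; rewrite mem_undup => /mapP [x xL ->]; case: (HQ x xL).
Qed.

Section Main.
Variables (I : finType) (T : ctree I) (bleaf : seq bool -> seq bool -> bool) (Csp : nat).
Hypothesis wfT : ctree_wf T.

Definition triple := (seq bool * seq bool * seq bool)%type.

Definition expand (x : triple) : seq triple :=
  if ~~ bleaf x.1.1 x.1.2 && ~~ bleaf x.1.2 x.2 then
    flatten [seq flatten [seq [seq (t', s', r') | r' <- sonsp T x.2]
                         | s' <- sonsp T x.1.2] | t' <- sonsp T x.1.1]
  else [::].

Lemma mem_expand x y : y \in expand x ->
  [/\ ~~ bleaf x.1.1 x.1.2, ~~ bleaf x.1.2 x.2, y.1.1 \in sonsp T x.1.1,
      y.1.2 \in sonsp T x.1.2 & y.2 \in sonsp T x.2].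
Proof.
rewrite /expand; case: ifP => // /andP[h1 h2].
move=> /flattenP [ys /mapP [t' t'in ->]] /flattenP [zs /mapP [s' s'in ->]].
by move=> /mapP [r' r'in ->].
Qed.

Lemma mem_inner (a : seq bool) (B C : seq (seq bool)) (y : triple) :
  y \in flatten [seq [seq (a, s', r') | r' <- C] | s' <- B] -> y.1.1 = a.
Proof. by move=> /flattenP [zs /mapP [s' _ E]]; rewrite E => /mapP [r' _ ->]. Qed.

Lemma mem_inner2 (a b : seq bool) (C : seq (seq bool)) (y : triple) :
  y \in [seq (a, b, r') | r' <- C] -> y.1.2 = b.
Proof. by move=> /mapP [r' _ ->]. Qed.

Lemma expand_uniq x : uniq (expand x).
Proof.
rewrite /expand; case: ifP => // _.
apply: uniq_flatten_map; first exact: sonsp_uniq; last first.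
  by move=> a a' y _ _ /mem_inner E1 /mem_inner E2; rewrite -E1 -E2.
move=> t' _; apply: uniq_flatten_map; first exact: sonsp_uniq; last first.
  by move=> a a' y _ _ /mem_inner2 E1 /mem_inner2 E2; rewrite -E1 -E2.
move=> s' _; by rewrite map_inj_uniq ?sonsp_uniq // => a b [->].
Qed.

Lemma ttree_btree t s r : in_ttree T bleaf t s r ->
  in_btree T bleaf t s /\ in_btree T bleaf s r.
Proof.
elim=> [|t1 s1 r1 t' s' r' _ [IH1 IH2] n1 n2 i1 i2 i3].
  by split; apply: bt_root.
by split; [apply: (bt_son IH1 n1 i1 i2) | apply: (bt_son IH2 n2 i2 i3)].
Qed.

Lemma ttree_lvl t s r : in_ttree T bleaf t s r ->
  exists M, [/\ lvl T M t, lvl T M s & lvl T M r].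
Proof.
elim=> [|t1 s1 r1 t' s' r' _ [M [l1 l2 l3]] n1 n2 i1 i2 i3].
  by exists 0%N; rewrite /lvl /is_cluster node_nil.
by exists M.+1; split; [apply: (sons_lvl l1 i1)|apply: (sons_lvl l2 i2)|apply: (sons_lvl l3 i3)].
Qed.

Definition Lv (x0 : triple) n := iter n (fun L => flatten (map expand L)) [:: x0].

Definition pre (a b : seq bool) := exists q, b = a ++ q.

Definition good M (x0 y : triple) :=
  [/\ in_ttree T bleaf y.1.1 y.1.2 y.2,
      [/\ lvl T M y.1.1, lvl T M y.1.2 & lvl T M y.2]
    & [/\ pre x0.1.1 y.1.1, pre x0.1.2 y.1.2 & pre x0.2 y.2]].

Lemma pre_sons a b c : pre a b -> c \in sonsp T b -> pre a c.
Proof. move=> [q ->] /sons_pre [q' ->]; by exists (q ++ q'); rewrite catA. Qed.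

Lemma Lv_inv x0 M n : good M x0 x0 ->
  uniq (Lv x0 n) /\ forall y, y \in Lv x0 n -> good (M + n) x0 y.
Proof.
move=> G0; elim: n => [|n [U IH]].
  by split => // y; rewrite inE => /eqP ->; rewrite addn0.
split.
- apply: uniq_flatten_map => //; first by move=> x _; exact: expand_uniq.
  move=> x x' y /IH [_ [a1 a2 a3] _] /IH [_ [b1 b2 b3] _].
  move=> /mem_expand [_ _ c1 c2 c3] /mem_expand [_ _ d1 d2 d3].
  have e1 := sons_take a1 c1; have e2 := sons_take a2 c2; have e3 := sons_take a3 c3.
  have f1 := sons_take b1 d1; have f2 := sons_take b2 d2; have f3 := sons_take b3 d3.
  by case: x x' e1 e2 e3 f1 f2 f3 {a1 a2 a3 b1 b2 b3 c1 c2 c3 d1 d2 d3} => [[? ?] ?] [[? ?] ?] /= -> -> -> -> -> ->.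
- move=> y /flattenP [ys /mapP [x /IH [tx [a1 a2 a3] [p1 p2 p3]] ->]] yx.
  have [n1 n2 c1 c2 c3] := mem_expand yx.
  rewrite addnS; split.
  + by apply: (tt_son tx n1 n2).
  + by split; [apply: (sons_lvl a1 c1)|apply: (sons_lvl a2 c2)|apply: (sons_lvl a3 c3)].
  + by split; [apply: (pre_sons p1 c1)|apply: (pre_sons p2 c2)|apply: (pre_sons p3 c3)].
Qed.


Lemma comp_bound (L : seq triple) (f g h : triple -> seq bool) M p0
  (Q1 : seq bool -> seq bool -> Prop) (Q2 : seq bool -> seq bool -> seq bool -> Prop) :
  uniq L ->
  {in L &, forall x y, f x = f y -> g x = g y -> h x = h y -> x = y} ->
  (forall a bs, uniq bs -> (forall b, b \in bs -> Q1 a b) -> (size bs <= Csp)%N) ->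
  (forall a b cs, uniq cs -> (forall c, c \in cs -> Q2 a b c) -> (size cs <= Csp)%N) ->
  (forall y, y \in L -> [/\ lvl T M (f y), pre p0 (f y), Q1 (f y) (g y) & Q2 (f y) (g y) (h y)]) ->
  (\sum_(y <- L) #|hat T (f y)| <= Csp * Csp * #|hat T p0|)%N.
Proof.
move=> UL Inj HQ1 HQ2 HL.
rewrite (@regroup _ _ L f (fun b => #|hat T b|) (undup (map f L))) ?undup_uniq //; last first.
  by move=> b; rewrite mem_undup.
apply: (@leq_trans (\sum_(b <- undup (map f L)) #|hat T b| * (Csp * Csp))).
  apply: leq_sum => b bin; rewrite leq_mul2l; apply/orP; right.
  rewrite -size_filter; apply: (count2 (g := g) (h := h) (Q1 := Q1 b) (Q2 := Q2 b)).
  - exact: filter_uniq.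
  - move=> x y; rewrite !mem_filter => /andP[/eqP fx xL] /andP[/eqP fy yL] gxy hxy.
    by apply: Inj => //; rewrite fx fy.
  - exact: HQ1.
  - exact: HQ2.
  - move=> x; rewrite mem_filter => /andP[/eqP <- xL]; have [_ _ ? ?] := HL x xL; by split.
rewrite -big_distrl /= mulnC leq_mul2l; apply/orP; right.
apply: (sum_disj wfT (M := M)); first exact: undup_uniq.
move=> b; rewrite mem_undup => /mapP [y yL ->]; have [Ly [q Eq] _ _] := HL y yL.
by split => //; rewrite Eq; apply: (hat_cat wfT).
Qed.

Definition Sz (y : triple) := (#|hat T y.1.1| + #|hat T y.1.2| + #|hat T y.2|)%N.

Lemma level_bound x0 M n : sparse T bleaf Csp -> good M x0 x0 ->
  (\sum_(y <- Lv x0 n) Sz y <= Csp * Csp * Sz x0)%N.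
Proof.
move=> [sp1 sp2] G0; have [U G] := Lv_inv n G0.
rewrite /Sz !big_split /= !mulnDr; apply: leq_add; first apply: leq_add.
- apply: (comp_bound (g := fun y => y.1.2) (h := fun y => y.2) (M := M + n)
     (Q1 := fun a b => in_btree T bleaf a b) (Q2 := fun a b c => in_btree T bleaf b c)).
  + exact: U.
  + by move=> [[? ?] ?] [[? ?] ?] _ _ /= -> -> ->.
  + by move=> a bs; apply: sp1.
  + by move=> a b cs; apply: sp1.
  + move=> y /G [ty [l1 _ _] [p1 _ _]]; have [b1 b2] := ttree_btree ty; by split.
- apply: (comp_bound (g := fun y => y.1.1) (h := fun y => y.2) (M := M + n)
     (Q1 := fun a b => in_btree T bleaf b a) (Q2 := fun a b c => in_btree T bleaf a c)).
  + exact: U.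
  + by move=> [[? ?] ?] [[? ?] ?] _ _ /= -> -> ->.
  + by move=> a bs; apply: sp2.
  + by move=> a b cs; apply: sp1.
  + move=> y /G [ty [_ l2 _] [_ p2 _]]; have [b1 b2] := ttree_btree ty; by split.
- apply: (comp_bound (g := fun y => y.1.2) (h := fun y => y.1.1) (M := M + n)
     (Q1 := fun a b => in_btree T bleaf b a) (Q2 := fun a b c => in_btree T bleaf c b)).
  + exact: U.
  + by move=> [[? ?] ?] [[? ?] ?] _ _ /= -> -> ->.
  + by move=> a bs; apply: sp2.
  + by move=> a b cs; apply: sp2.
  + move=> y /G [ty [_ _ l3] [_ _ p3]]; have [b1 b2] := ttree_btree ty; by split.
Qed.

Lemma Lv_end x0 M : is_block_tree T bleaf -> good M x0 x0 ->
  forall x, x \in Lv x0 (depth T) -> expand x = [::].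
Proof.
move=> BT G0 x /(proj2 (Lv_inv _ G0)) [tx [l1 l2 l3] _].
have [b1 _] := ttree_btree tx.
have lf1 := lvl_leaf (leq_addl _ _) l1; have lf2 := lvl_leaf (leq_addl _ _) l2.
by rewrite /expand (BT _ _ b1 lf1 lf2).
Qed.

Lemma LvS x0 n : Lv x0 n.+1 = flatten (map expand (Lv x0 n)).
Proof. by []. Qed.

End Main.

End Aux.
Import Aux.
Local Open Scope ring_scope.

Theorem mainTheorem2 (R : realFieldType) (I : finType) (T : ctree I)
  (bleaf : seq bool -> seq bool -> bool) (Csp k : nat) (Cmb : R)
  (W : seq bool -> seq bool -> seq bool -> nat) :
  is_cluster_tree T ->
  is_block_tree T bleaf ->
  sparse T bleaf Csp ->
  0 <= Cmb ->
  (forall t s r, in_btree T bleaf t s -> in_btree T bleaf s r ->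
     bleaf t s || bleaf s r ->
     (W t s r)%:R <= Cmb * (k ^ 2)%:R
                     * (#|hat T t| + #|hat T s| + #|hat T r|)%:R) ->
  (forall t s r, in_btree T bleaf t s -> in_btree T bleaf s r ->
     ~~ bleaf t s -> ~~ bleaf s r ->
     (W t s r)%:R <= Cmb * (k ^ 2)%:R
                     * (#|hat T t| + #|hat T s| + #|hat T r|)%:R
       + (\sum_(t' <- sonsp T t) \sum_(s' <- sonsp T s)
            \sum_(r' <- sonsp T r) W t' s' r')%:R) ->
  forall t0 s0 r0, in_ttree T bleaf t0 s0 r0 ->
    (W t0 s0 r0)%:R <=
      ((Csp ^ 2)%:R * Cmb) * (k ^ 2)%:R * (depth T).+1%:R
        * (#|hat T t0| + #|hat T s0| + #|hat T r0|)%:R.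
Proof.
move=> /andP[wfT _] BT SP Hc H1 H2 t0 s0 r0 Ht.
have [M [l1 l2 l3]] := ttree_lvl Ht.
pose x0 : triple := (t0, s0, r0).
have G0 : good T bleaf M x0 x0.
  by split => //; split; exists [::]; rewrite cats0.
set c := Cmb * (k ^ 2)%:R.
have c0 : 0 <= c by rewrite /c mulr_ge0.
pose Wt (y : triple) : R := (W y.1.1 y.1.2 y.2)%:R.
have step : forall y : triple, in_ttree T bleaf y.1.1 y.1.2 y.2 ->
    Wt y <= c * (Sz T y)%:R + \sum_(z <- expand T bleaf y) Wt z.
  move=> [[t s] r] /= Hy; have [b1 b2] := ttree_btree Hy.
  rewrite /Wt /expand /=; case: ifP => [/andP[n1 n2]|/negbT].
    apply: (le_trans (H2 _ _ _ b1 b2 n1 n2)); rewrite lerD2l.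
    rewrite natr_sum big_flatten big_map; apply: ler_sum => t' _.
    rewrite natr_sum big_flatten big_map; apply: ler_sum => s' _.
    by rewrite natr_sum big_map; apply: ler_sum => r' _.
  by rewrite negb_and !negbK => Hl; rewrite big_nil addr0; apply: H1.
have claim : forall n, Wt x0 <= \sum_(i < n) c * (\sum_(y <- Lv T bleaf x0 i) (Sz T y)%:R)
                                  + \sum_(y <- Lv T bleaf x0 n) Wt y.
  elim=> [|n IH]; first by rewrite big_ord0 add0r /= big_cons big_nil addr0.
  apply: (le_trans IH); rewrite big_ord_recr -addrA lerD2l.
  rewrite LvS big_flatten big_map mulr_sumr -big_split /=.
  rewrite big_seq [X in _ <= X]big_seq; apply: ler_sum => y yin.
  have [_ G] := Lv_inv n G0.
  by have [ty _ _] := G y yin; apply: step.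
have E0 : \sum_(y <- Lv T bleaf x0 (depth T).+1) Wt y = 0.
  rewrite LvS big_flatten big_map big1_seq //.
  by move=> x /andP[_ xin]; rewrite (Lv_end BT G0 xin) big_nil.
have := claim (depth T).+1; rewrite E0 addr0.
move=> /le_trans; apply.
apply: (@le_trans _ _ (\sum_(i < (depth T).+1) c * (Csp * Csp * Sz T x0)%:R)).
  apply: ler_sum => i _; apply: ler_wpM2l => //.
  by rewrite -natr_sum ler_nat; apply: (level_bound wfT i SP G0).
rewrite sumr_const card_ord /Sz /= -mulr_natr.
rewrite -mulr_natr /c.
by rewrite le_eqVlt; apply/orP; left; apply/eqP; ring.
Qed.
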